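(* Let $\mathcal{S}$ and $\mathcal{A}$ be quantum systems (the open system and an ancilla), let $\mathcal{E}_{t_1}$ and $\mathcal{E}_{t_2}$ be two completely positive trace-preserving (CPT) maps on $\mathcal{S}$, and let $\rho^{\mathcal{S}\mathcal{A}}_0$ be a joint state of $\mathcal{S}$ and $\mathcal{A}$. For $t\in\{t_1,t_2\}$ set $\rho^{\mathcal{S}\mathcal{A}}_t=(\mathcal{E}_t\otimes \mathbb{1}_{\mathcal{A}})[\rho^{\mathcal{S}\mathcal{A}}_0]$. Let $f$ be a non-negative function on states of $\mathcal{S}\mathcal{A}$ which is non-increasing under local CPT maps on $\mathcal{S}$, i.e. $f((\Phi\otimes\mathbb{1}_{\mathcal{A}})[\rho])\le f(\rho)$ for every CPT map $\Phi$ on $\mathcal{S}$ and every state $\rho$. Define, for a state $\rho^{\mathcal{S}\mathcal{A}}$, $$F_f[\rho^{\mathcal{S}\mathcal{A}}]=\min_{\{p_k,\rho_k\}}\sum_k p_k f(\rho_k),\qquad F_f^\sharp[\rho^{\mathcal{S}\mathcal{A}}]=\max_{\{p_k,\rho_k\}}\sum_k p_k f(\rho_k),$$ where the minimum and maximum run over all decompositions of $\rho^{\mathcal{S}\mathcal{A}}$ into states, i.e. probabilities $p_k\ge 0$ and states $\rho_k$ of $\mathcal{S}\mathcal{A}$ with $\sum_k p_k\rho_k=\rho^{\mathcal{S}\mathcal{A}}$. If $$F_f^\sharp[\rho^{\mathcal{S}\mathcal{A}}_{t_1}]<F_f[\rho^{\mathcal{S}\mathcal{A}}_{t_2}]$$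 for some such $f$, then the dynamics $(\mathcal{E}_{t_1},\mathcal{E}_{t_2})$ is not realizable with classical memory.
   Context: A dynamics $(\mathcal{E}_{t_1},\mathcal{E}_{t_2})$, consisting of two CPT maps on system $\mathcal{S}$, is called realizable with classical memory if there exist operators $K_i$ on $\mathcal{S}$ with $\sum_i K_i^\dagger K_i=\mathbb{1}$ and CPT maps $\Phi_i$ on $\mathcal{S}$ such that for all states $\rho$ of $\mathcal{S}$: $\mathcal{E}_{t_1}[\rho]=\sum_i K_i\rho K_i^\dagger$ and $\mathcal{E}_{t_2}[\rho]=\sum_i\Phi_i[K_i\rho K_i^\dagger]$. The ancilla $\mathcal{A}$ is untouched by the dynamics; $\mathbb{1}_{\mathcal{A}}$ denotes the identity map on $\mathcal{A}$. *)

(* Defs.v *)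
From HB Require Import structures.
From mathcomp Require Import all_boot all_order all_algebra.
From mathcomp Require Import all_classical all_reals.
From mathcomp Require Import ereal.
From mathcomp Require Import complex mxtens.

Set Implicit Arguments.
Unset Strict Implicit.
Unset Printing Implicit Defensive.
Import Order.TTheory GRing.Theory Num.Theory.
Local Open Scope ring_scope.

Definition adjmx {R : rcfType} {m n : nat} (A : 'M[R[i]]_(m, n)) : 'M[R[i]]_(n, m) :=
  (map_mx (@conjc R) A)^T.

Definition psdmx {R : rcfType} {n : nat} (A : 'M[R[i]]_n) : Prop :=
  adjmx A = A /\ forall v : 'cV[R[i]]_n, 0 <= (adjmx v *m A *m v) 0 0.

Definition is_state {R : rcfType} {n : nat} (A : 'M[R[i]]_n) : Prop :=
  psdmx A /\ \tr A = 1.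

(* the (a,b) block of a matrix on S (x) A, indices ordered as in mxtens *)
Definition block {R : rcfType} {d e : nat} (X : 'M[R[i]]_(d * e)) (a b : 'I_e)
  : 'M[R[i]]_d :=
  \matrix_(i, j) X (mxtens_index (i, a)) (mxtens_index (j, b)).

(* (Phi (x) 1_A)[X] for a map Phi on the first tensor factor *)
Definition tens_id {R : rcfType} {d e : nat}
  (Phi : 'M[R[i]]_d -> 'M[R[i]]_d) (X : 'M[R[i]]_(d * e)) : 'M[R[i]]_(d * e) :=
  \sum_(a < e) \sum_(b < e) (Phi (block X a b) *t (delta_mx a b : 'M[R[i]]_e)).

Definition linear_map {R : rcfType} {d : nat} (Phi : 'M[R[i]]_d -> 'M[R[i]]_d) : Prop :=
  forall (c : R[i]) (X Y : 'M[R[i]]_d), Phi (c *: X + Y) = c *: Phi X + Phi Y.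

Definition completely_positive {R : rcfType} {d : nat}
  (Phi : 'M[R[i]]_d -> 'M[R[i]]_d) : Prop :=
  forall (n : nat) (X : 'M[R[i]]_(d * n)), psdmx X -> psdmx (tens_id Phi X).

Definition trace_preserving {R : rcfType} {d : nat}
  (Phi : 'M[R[i]]_d -> 'M[R[i]]_d) : Prop :=
  forall X : 'M[R[i]]_d, \tr (Phi X) = \tr X.

Definition CPT {R : rcfType} {d : nat} (Phi : 'M[R[i]]_d -> 'M[R[i]]_d) : Prop :=
  [/\ linear_map Phi, completely_positive Phi & trace_preserving Phi].

Definition realizable_classical_memory {R : rcfType} {d : nat}
  (E1 E2 : 'M[R[i]]_d -> 'M[R[i]]_d) : Prop :=
  exists (n : nat) (K : 'I_n -> 'M[R[i]]_d) (Phis : 'I_n -> 'M[R[i]]_d -> 'M[R[i]]_d),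
    [/\ \sum_(k < n) adjmx (K k) *m K k = 1%:M,
        forall k, CPT (Phis k)
      & forall rho : 'M[R[i]]_d, is_state rho ->
          E1 rho = \sum_(k < n) K k *m rho *m adjmx (K k) /\
          E2 rho = \sum_(k < n) Phis k (K k *m rho *m adjmx (K k))].

Definition decomp_values {R : realType} {D : nat}
  (f : 'M[R[i]]_D -> R) (rho : 'M[R[i]]_D) : set (\bar R) :=
  [set x | exists (n : nat) (p : 'I_n -> R) (s : 'I_n -> 'M[R[i]]_D),
      [/\ forall k, 0 <= p k,
          forall k, is_state (s k),
          \sum_(k < n) real_complex R (p k) *: s k = rho
        & x = (\sum_(k < n) p k * f (s k))%:E]].

(* F_f (min = inf) and F_f^# (max = sup), in the extended reals *)
Definition F_min {R : realType} {D : nat} (f : 'M[R[i]]_D -> R) (rho : 'M[R[i]]_D)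
  : \bar R := ereal_inf (decomp_values f rho).
Definition F_max {R : realType} {D : nat} (f : 'M[R[i]]_D -> R) (rho : 'M[R[i]]_D)
  : \bar R := ereal_sup (decomp_values f rho).

(* Main.v *)
Require Import Defs.
From HB Require Import structures.
From mathcomp Require Import all_boot all_order all_algebra.
From mathcomp Require Import all_classical all_reals.
From mathcomp Require Import ereal.
From mathcomp Require Import complex mxtens.
From mathcomp Require Import ring.
Import Order.TTheory GRing.Theory Num.Theory.
Local Open Scope ring_scope.
Set Implicit Arguments.
Unset Strict Implicit.

Lemma adjmxK (R : realType) m n (A : 'M[R[i]]_(m,n)) : adjmx (adjmx A) = A.
Proof. by apply/matrixP=> i j; rewrite !mxE conjcK. Qed.

Lemma adjmxM (R : realType) m n p (A : 'M[R[i]]_(m,n)) (B : 'M[R[i]]_(n,p)) :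
  adjmx (A *m B) = adjmx B *m adjmx A.
Proof. by rewrite /adjmx map_mxM trmx_mul. Qed.

Lemma adjmxD (R : realType) m n (A B : 'M[R[i]]_(m,n)) :
  adjmx (A + B) = adjmx A + adjmx B.
Proof. by apply/matrixP=> i j; rewrite !mxE rmorphD. Qed.

Lemma adjmxZ (R : realType) m n (c : R[i]) (A : 'M[R[i]]_(m,n)) :
  adjmx (c *: A) = conjc c *: adjmx A.
Proof. by apply/matrixP=> i j; rewrite !mxE rmorphM. Qed.

Lemma adjmx_delta (R : realType) m n (i : 'I_m) (j : 'I_n) :
  adjmx (delta_mx i j : 'M[R[i]]_(m,n)) = delta_mx j i.
Proof. by apply/matrixP=> k l; rewrite !mxE conjc_nat andbC. Qed.

Lemma quad_delta (R : realType) n (X : 'M[R[i]]_n) (i j : 'I_n) :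
  (adjmx (delta_mx i 0 : 'cV[R[i]]_n) *m X *m (delta_mx j 0 : 'cV[R[i]]_n)) 0 0 = X i j.
Proof. by rewrite adjmx_delta -rowE -colE !mxE. Qed.

Lemma psd_diag (R : realType) n (X : 'M[R[i]]_n) (i : 'I_n) : psdmx X -> 0 <= X i i.
Proof. by case=> _ /(_ (delta_mx i 0)); rewrite quad_delta. Qed.

Lemma herm_entry (R : realType) n (X : 'M[R[i]]_n) (i j : 'I_n) : psdmx X -> X j i = conjc (X i j).
Proof. by case=> /matrixP /(_ j i) <- _; rewrite !mxE. Qed.

Lemma mx00D (R : realType) (A B : 'M[R[i]]_1) : (A + B) 0 0 = A 0 0 + B 0 0.
Proof. by rewrite mxE. Qed.
Lemma mx00Z (R : realType) c (A : 'M[R[i]]_1) : (c *: A) 0 0 = c * A 0 0.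
Proof. by rewrite mxE. Qed.

Lemma quadD (R : realType) n (X : 'M[R[i]]_n) (u w : 'cV[R[i]]_n) c :
  (adjmx (u + c *: w) *m X *m (u + c *: w)) 0 0 =
  (adjmx u *m X *m u) 0 0 + c * (adjmx u *m X *m w) 0 0
  + conjc c * (adjmx w *m X *m u) 0 0 + conjc c * c * (adjmx w *m X *m w) 0 0.
Proof.
rewrite adjmxD adjmxZ !mulmxDl !mulmxDr -!scalemxAl -!scalemxAr !mx00D !mx00Z.
by rewrite mulrA; ring.
Qed.

Lemma psd0 (R : realType) n (X : 'M[R[i]]_n) : psdmx X -> \tr X = 0 -> X = 0.
Proof.
move=> hX htr.
have hd : forall i, X i i = 0.
  move=> i; apply: (psumr_eq0P (P := xpredT) (F := fun i => X i i)) => //.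
  by move=> k _; apply: psd_diag.
apply/matrixP=> i j; rewrite mxE.
set c := - conjc (X i j).
have cc : conjc c = - X i j by rewrite /c; case: (X i j) => a b /=; rewrite opprK.
have := hX.2 (delta_mx i 0 + c *: delta_mx j 0).
rewrite quadD !quad_delta !hd (@herm_entry _ _ X i j hX) mulr0 add0r addr0 cc /c.
have -> : - conjc (X i j) * X i j + - X i j * conjc (X i j) = - (2%:R * (X i j * conjc (X i j))) by ring.
rewrite oppr_ge0 pmulr_rle0 ?ltr0n // => hle.
have : X i j * conjc (X i j) = 0 by apply/le_anti; rewrite hle mulcJ_ge0.
by move/eqP; rewrite mulf_eq0 conjc_eq0 orbb => /eqP.
Qed.

Lemma psd_outer (R : realType) n (w : 'cV[R[i]]_n) : psdmx (w *m adjmx w).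
Proof.
split; first by rewrite adjmxM adjmxK.
move=> v; rewrite mulmxA -mulmxA.
have -> : adjmx w *m v = adjmx (adjmx v *m w) by rewrite adjmxM adjmxK.
set z := adjmx v *m w.
rewrite mxE big_ord1.
have -> : adjmx z 0 0 = conjc (z 0 0) by rewrite !mxE.
exact: mulcJ_ge0.
Qed.

Lemma outerE (R : realType) d (w z : 'cV[R[i]]_d) k l :
  (w *m adjmx z) k l = w k 0 * conjc (z l 0).
Proof. by rewrite mxE big_ord1 !mxE. Qed.
Lemma mxDE (R : realType) m n (A B : 'M[R[i]]_(m,n)) k l : (A + B) k l = A k l + B k l.
Proof. by rewrite mxE. Qed.
Lemma mxZE (R : realType) m n c (A : 'M[R[i]]_(m,n)) k l : (c *: A) k l = c * A k l.
Proof. by rewrite mxE. Qed.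
Lemma ent4 (R : realType) m n (A B C D : 'M[R[i]]_(m,n)) c1 c2 c3 c4 k l :
  (c1 *: A + c2 *: B + c3 *: C + c4 *: D) k l = c1 * A k l + c2 * B k l + c3 * C k l + c4 * D k l.
Proof. by rewrite !mxE. Qed.
Lemma ci (R : realType) : conjc 'i%C = - 'i%C :> R[i].
Proof. by apply/eqP; rewrite eq_complex /= oppr0 !eqxx. Qed.
Lemma conjcDM (R : realType) (a c b : R[i]) : conjc (a + c * b) = conjc a + conjc c * conjc b.
Proof. by rewrite rmorphD rmorphM. Qed.
Lemma conjcN1 (R : realType) : conjc (-1) = -1 :> R[i].
Proof. by apply/eqP; rewrite eq_complex /= !oppr0 !eqxx. Qed.
Lemma conjcNi (R : realType) : conjc (- 'i%C) = 'i%C :> R[i].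
Proof. by apply/eqP; rewrite eq_complex /= !oppr0 opprK !eqxx. Qed.
Lemma polar (R: realType) (a b a1 b1 : R[i]) :
  4%:R * (a * b1) = 1 * ((a + 1*b)*(a1 + 1*b1)) + (-1) * ((a + -1*b)*(a1 + -1*b1))
   + 'i%C*((a+'i%C*b)*(a1 + -'i%C*b1)) + (-'i%C)*((a + -'i%C*b)*(a1 + 'i%C*b1)).
Proof.
have hi : 'i%C * 'i%C = -1 :> R[i] by rewrite -expr2 sqr_i.
move: hi; generalize ('i%C : R[i]) => z hz. ring: hz.
Qed.
Lemma polmx (R : realType) d (u v w1 w2 w3 w4 : 'cV[R[i]]_d) :
  (forall k, w1 k 0 = u k 0 + 1 * v k 0) ->
  (forall k, w2 k 0 = u k 0 + (-1) * v k 0) ->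
  (forall k, w3 k 0 = u k 0 + 'i%C * v k 0) ->
  (forall k, w4 k 0 = u k 0 + (-'i%C) * v k 0) ->
  4%:R *: (u *m adjmx v) = 1 *: (w1 *m adjmx w1) + (-1) *: (w2 *m adjmx w2)
     + 'i%C *: (w3 *m adjmx w3) + (-'i%C) *: (w4 *m adjmx w4).
Proof.
move=> h1 h2 h3 h4; apply/matrixP => k l.
rewrite [LHS]mxZE [RHS]ent4 !outerE !h1 !h2 !h3 !h4.
rewrite !conjcDM conjc1 conjcN1 ci conjcNi.
exact: polar.
Qed.

Lemma lin0 (R : realType) d (L : 'M[R[i]]_d -> 'M[R[i]]_d) : linear_map L -> L 0 = 0.
Proof.
move=> hL; have h := hL 1 0 0; rewrite !scale1r addr0 in h.
by apply: (addrI (L 0)); rewrite addr0 -h.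
Qed.

Lemma linD (R : realType) d (L : 'M[R[i]]_d -> 'M[R[i]]_d) : linear_map L ->
  forall X Y, L (X + Y) = L X + L Y.
Proof. by move=> hL X Y; rewrite -[X]scale1r hL !scale1r. Qed.

Lemma linZ (R : realType) d (L : 'M[R[i]]_d -> 'M[R[i]]_d) : linear_map L ->
  forall c X, L (c *: X) = c *: L X.
Proof. by move=> hL c X; rewrite -[c *: X]addr0 hL lin0 // addr0. Qed.

Lemma linN (R : realType) d (L : 'M[R[i]]_d -> 'M[R[i]]_d) : linear_map L ->
  forall X, L (- X) = - L X.
Proof. by move=> hL X; rewrite -scaleN1r linZ // scaleN1r. Qed.

Lemma linB (R : realType) d (L : 'M[R[i]]_d -> 'M[R[i]]_d) : linear_map L ->
  forall X Y, L (X - Y) = L X - L Y.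
Proof. by move=> hL X Y; rewrite linD // linN. Qed.

Lemma lin4 (R : realType) d (L : 'M[R[i]]_d -> 'M[R[i]]_d) : linear_map L ->
  forall c1 c2 c3 c4 A B C D, L (c1 *: A + c2 *: B + c3 *: C + c4 *: D) =
    c1 *: L A + c2 *: L B + c3 *: L C + c4 *: L D.
Proof. by move=> hL *; rewrite !(linD hL) !(linZ hL). Qed.

Lemma conj_ge0_id (R : realType) (c : R[i]) : 0 <= c -> conjc c = c.
Proof.
rewrite lecE => /andP [/eqP h _]; move: h.
by case: c => a b /= ->; apply/eqP; rewrite eq_complex /= oppr0 !eqxx.
Qed.

Lemma psd_scale (R : realType) d (c : R[i]) (X : 'M[R[i]]_d) :
  0 <= c -> psdmx X -> psdmx (c *: X).
Proof.
move=> hc [hh hq]; split; first by rewrite adjmxZ conj_ge0_id // hh.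
by move=> v; rewrite -scalemxAr -scalemxAl mx00Z mulr_ge0.
Qed.

Lemma tr_ge0 (R : realType) d (X : 'M[R[i]]_d) : psdmx X -> 0 <= \tr X.
Proof. by move=> hX; apply: sumr_ge0 => i _; apply: psd_diag. Qed.

Lemma agree (R : realType) d (L M : 'M[R[i]]_d -> 'M[R[i]]_d) :
  linear_map L -> linear_map M -> (forall rho, is_state rho -> L rho = M rho) ->
  forall X, L X = M X.
Proof.
move=> hL hM h.
have hpsd : forall X, psdmx X -> L X = M X.
  move=> X hX; have [t0|tn0] := eqVneq (\tr X) 0.
    by rewrite (@psd0 _ _ X hX t0) !lin0.
  have -> : X = \tr X *: ((\tr X)^-1 *: X) by rewrite scalerA mulfV // scale1r.
  rewrite (linZ hL) (linZ hM) h //; split.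
    by apply: psd_scale => //; rewrite invr_ge0 tr_ge0.
  by rewrite mxtraceZ mulVf.
have hout : forall w : 'cV_d, L (w *m adjmx w) = M (w *m adjmx w).
  by move=> w; apply/hpsd/psd_outer.
have hE : forall i j, L (delta_mx i j) = M (delta_mx i j).
  move=> i j.
  set u := delta_mx i 0 : 'cV[R[i]]_d; set v := delta_mx j 0 : 'cV[R[i]]_d.
  have hd : delta_mx i j = u *m adjmx v by rewrite adjmx_delta mul_delta_mx.
  have pol : 4%:R *: (u *m adjmx v) = 1 *: ((u + 1 *: v) *m adjmx (u + 1*: v))
     + (-1) *: ((u + (-1) *: v) *m adjmx (u + (-1)*:v))
     + 'i%C *: ((u + 'i%C *: v) *m adjmx (u + 'i%C *: v))
     + (-'i%C) *: ((u + (-'i%C) *: v) *m adjmx (u + (-'i%C) *: v)).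
    clearbody u v; by apply: polmx => k; rewrite !mxE.
  have : L (4%:R *: delta_mx i j) = M (4%:R *: delta_mx i j).
    rewrite hd pol (lin4 hL) (lin4 hM).
    by congr (_ *: _ + _ *: _ + _ *: _ + _ *: _); apply: hout.
  rewrite (linZ hL) (linZ hM).
  by move/scalerI; apply; rewrite pnatr_eq0.
move=> X; rewrite (matrix_sum_delta X) (big_morph L (linD hL) (lin0 hL)).
rewrite (big_morph M (linD hM) (lin0 hM)); apply: eq_bigr => i _.
rewrite (big_morph L (linD hL) (lin0 hL)) (big_morph M (linD hM) (lin0 hM)).
by apply: eq_bigr => j _; rewrite (linZ hL) (linZ hM) hE.
Qed.

Lemma blockE (R : realType) d e (X : 'M[R[i]]_(d * e)) a b i j :
  block X a b i j = X (mxtens_index (i, a)) (mxtens_index (j, b)).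
Proof. by rewrite /block mxE. Qed.

Lemma mulE (R : realType) m n p (A : 'M[R[i]]_(m,n)) (B : 'M[R[i]]_(n,p)) i j :
  (A *m B) i j = \sum_k A i k * B k j.
Proof. by rewrite mxE. Qed.

Lemma adjE (R : realType) m n (A : 'M[R[i]]_(m,n)) i j : adjmx A i j = conjc (A j i).
Proof. by rewrite !mxE. Qed.

Lemma idE (R : realType) e (a b : 'I_e) : (1%:M : 'M[R[i]]_e) a b = (a == b)%:R.
Proof. by rewrite mxE. Qed.

Lemma deltaE (R : realType) m n (x i : 'I_m) (y j : 'I_n) :
  (delta_mx x y : 'M[R[i]]_(m,n)) i j = ((i == x) && (j == y))%:R.
Proof. by rewrite mxE. Qed.

Lemma pick_sum (R : realType) e (F : 'I_e -> R[i]) (a : 'I_e) :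
  \sum_(a' < e) (a == a')%:R * F a' = F a.
Proof.
rewrite (bigD1 a) //= eqxx mul1r big1 ?addr0 //.
by move=> a' ha; rewrite eq_sym (negbTE ha) mul0r.
Qed.

Lemma sum_tens (R : realType) d e (F : 'I_(d * e) -> R[i]) :
  \sum_k F k = \sum_(i < d) \sum_(a < e) F (mxtens_index (i, a)).
Proof.
rewrite pair_big /= (reindex (@mxtens_index d e)) /=; last first.
  by exists (@mxtens_unindex d e) => k _; rewrite (mxtens_indexK, mxtens_unindexK).
by apply: eq_bigr => [[i a]] _.
Qed.

Lemma block_ext (R : realType) d e (X Y : 'M[R[i]]_(d * e)) :
  (forall a b, block X a b = block Y a b) -> X = Y.
Proof.
move=> h; apply/matrixP => r s.
case: (mxtens_indexP r) => i a; case: (mxtens_indexP s) => j b.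
by have := congr1 (fun M : 'M[R[i]]_d => M i j) (h a b); rewrite /= !blockE.
Qed.

Lemma block_sum (R : realType) d e n (F : 'I_n -> 'M[R[i]]_(d * e)) a b :
  block (\sum_(k < n) F k) a b = \sum_(k < n) block (F k) a b.
Proof.
apply/matrixP => i j; rewrite blockE !summxE; apply: eq_bigr => k _.
by rewrite blockE.
Qed.

Lemma block_scale (R : realType) d e (c : R[i]) (X : 'M[R[i]]_(d * e)) a b :
  block (c *: X) a b = c *: block X a b.
Proof. by apply/matrixP => i j; rewrite blockE !mxZE blockE. Qed.

Lemma block_tens_id (R : realType) d e (Phi : 'M[R[i]]_d -> 'M[R[i]]_d)
  (X : 'M[R[i]]_(d * e)) a b : block (tens_id Phi X) a b = Phi (block X a b).
Proof.
apply/matrixP => i j; rewrite blockE /tens_id summxE.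
transitivity (\sum_(a' < e) \sum_(b' < e)
   ((a == a') && (b == b'))%:R * Phi (block X a' b') i j).
  apply: eq_bigr => a' _; rewrite summxE; apply: eq_bigr => b' _.
  by rewrite tensmxE deltaE mulrC.
transitivity (\sum_(a' < e) (a == a')%:R * Phi (block X a' b) i j).
  apply: eq_bigr => a' _.
  rewrite -[RHS](pick_sum (fun b' => (a == a')%:R * Phi (block X a' b') i j) b).
  by apply: eq_bigr => b' _; rewrite mulrA -natrM mulnb andbC.
by rewrite (pick_sum (fun a' => Phi (block X a' b) i j)).
Qed.

Lemma tr_block (R : realType) d e (X : 'M[R[i]]_(d * e)) :
  \tr X = \sum_(a < e) \tr (block X a a).
Proof.
rewrite /mxtrace sum_tens exchange_big; apply: eq_bigr => a _.
by apply: eq_bigr => i _; rewrite blockE.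
Qed.

Lemma tr_tens_id (R : realType) d e (Phi : 'M[R[i]]_d -> 'M[R[i]]_d)
  (X : 'M[R[i]]_(d * e)) : trace_preserving Phi -> \tr (tens_id Phi X) = \tr X.
Proof.
by move=> h; rewrite !tr_block; apply: eq_bigr => a _; rewrite block_tens_id h.
Qed.

Lemma state_tens_id (R : realType) d e (Phi : 'M[R[i]]_d -> 'M[R[i]]_d)
  (X : 'M[R[i]]_(d * e)) : CPT Phi -> is_state X -> is_state (tens_id Phi X).
Proof.
case=> _ hcp htp [hX hx]; split; first exact: hcp.
by rewrite tr_tens_id.
Qed.

Lemma block_mulL (R : realType) d e (A : 'M[R[i]]_d) (Z : 'M[R[i]]_(d * e)) a b :
  block ((A *t (1%:M : 'M[R[i]]_e)) *m Z) a b = A *m block Z a b.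
Proof.
apply/matrixP => i j; rewrite blockE !mulE sum_tens; apply: eq_bigr => k _.
rewrite blockE -[RHS](pick_sum (fun a' => A i k * Z (mxtens_index (k, a')) (mxtens_index (j, b))) a).
by apply: eq_bigr => a' _; rewrite tensmxE idE mulrCA mulrA.
Qed.

Lemma conjcM (R : realType) (x y : R[i]) : conjc (x * y) = conjc x * conjc y.
Proof. by rewrite rmorphM. Qed.

Lemma block_mulR (R : realType) d e (B : 'M[R[i]]_d) (Z : 'M[R[i]]_(d * e)) a b :
  block (Z *m adjmx (B *t (1%:M : 'M[R[i]]_e))) a b = block Z a b *m adjmx B.
Proof.
apply/matrixP => i j; rewrite blockE !mulE sum_tens; apply: eq_bigr => k _.
rewrite blockE adjE -[RHS](pick_sum (fun a' => Z (mxtens_index (i, a)) (mxtens_index (k, a')) * conjc (B j k)) b).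
apply: eq_bigr => a' _; rewrite adjE tensmxE idE conjcM conjc_nat.
by rewrite mulrA mulrC.
Qed.

Lemma psd_conj (R : realType) m (A Y : 'M[R[i]]_m) : psdmx Y -> psdmx (A *m Y *m adjmx A).
Proof.
case=> hY1 hY2; split; first by rewrite !adjmxM adjmxK hY1 mulmxA.
move=> v.
have -> : adjmx v *m (A *m Y *m adjmx A) *m v =
          adjmx (adjmx A *m v) *m Y *m (adjmx A *m v) by rewrite adjmxM adjmxK !mulmxA.
exact: hY2.
Qed.

Unset Implicit Arguments.
Set Strict Implicit.

Theorem theorem1 (R : realType) (dS dA : nat)
  (E1 E2 : 'M[R[i]]_dS -> 'M[R[i]]_dS) (rho0 : 'M[R[i]]_(dS * dA))
  (f : 'M[R[i]]_(dS * dA) -> R) :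
  CPT E1 -> CPT E2 -> is_state rho0 ->
  (forall rho, is_state rho -> 0 <= f rho) ->
  (forall (Phi : 'M[R[i]]_dS -> 'M[R[i]]_dS) (rho : 'M[R[i]]_(dS * dA)),
      CPT Phi -> is_state rho -> f (tens_id Phi rho) <= f rho) ->
  (F_max f (tens_id E1 rho0) < F_min f (tens_id E2 rho0))%E ->
  ~ realizable_classical_memory E1 E2.
Proof.
move=> cpt1 cpt2 st0 fge0 fmono Hlt [n [K [Phis [_ HPhi Hreal]]]].
pose G1 := fun X : 'M[R[i]]_dS => \sum_(k < n) K k *m X *m adjmx (K k).
pose G2 := fun X : 'M[R[i]]_dS => \sum_(k < n) Phis k (K k *m X *m adjmx (K k)).
have linG1 : linear_map G1.
  move=> c X Y; rewrite /G1 scaler_sumr -big_split; apply: eq_bigr => k _.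
  by rewrite mulmxDr mulmxDl -scalemxAr -scalemxAl.
have linG2 : linear_map G2.
  move=> c X Y; rewrite /G2 scaler_sumr -big_split; apply: eq_bigr => k _.
  rewrite mulmxDr mulmxDl -scalemxAr -scalemxAl.
  by case: (HPhi k) => hl _ _; rewrite hl.
have e1 : forall X, E1 X = G1 X.
  by apply: agree => //; [case: cpt1 | move=> rho hr; case: (Hreal rho hr)].
have e2 : forall X, E2 X = G2 X.
  by apply: agree => //; [case: cpt2 | move=> rho hr; case: (Hreal rho hr)].
pose Kt k := K k *t (1%:M : 'M[R[i]]_dA).
pose tau k := Kt k *m rho0 *m adjmx (Kt k).
have btau : forall k a b, block (tau k) a b = K k *m block rho0 a b *m adjmx (K k).
  by move=> k a b; rewrite /tau block_mulR block_mulL.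
have psdtau : forall k, psdmx (tau k) by move=> k; apply: psd_conj; case: st0.
pose pc k := \tr (tau k).
have pc0 : forall k, 0 <= pc k by move=> k; apply: tr_ge0.
pose p k := complex.Re (pc k).
have hp : forall k, real_complex R (p k) = pc k.
  move=> k; have := pc0 k; rewrite /p; case: (pc k) => x y.
  rewrite lecE => /andP [/eqP hy _]; move: hy => /= hy.
  by apply/eqP; rewrite eq_complex /= eqxx -hy eqxx.
have p0 : forall k, 0 <= p k by move=> k; rewrite -ler0c hp.
pose sigma k := if p k == 0 then rho0 else (pc k)^-1 *: tau k.
have stsig : forall k, is_state (sigma k).
  move=> k; rewrite /sigma; case: eqP => [_|hpk]; first exact: st0.
  have pcn0 : pc k != 0.
    apply/eqP => h; apply: hpk; apply: (@complexI R); rewrite hp h.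
    by apply/eqP; rewrite eq_complex /= !eqxx.
  split; first by apply: psd_scale => //; rewrite invr_ge0.
  by rewrite mxtraceZ mulVf.
have hsig : forall k, real_complex R (p k) *: sigma k = tau k.
  move=> k; rewrite /sigma hp; case: eqP => [hpk|hpk].
    have pck : pc k = 0 by rewrite -hp hpk; apply/eqP; rewrite eq_complex /= !eqxx.
    by rewrite pck scale0r (psd0 (psdtau k) pck).
  have pcn0 : pc k != 0.
    apply/eqP => h; apply: hpk; apply: (@complexI R); rewrite hp h.
    by apply/eqP; rewrite eq_complex /= !eqxx.
  by rewrite scalerA mulfV ?scale1r.
have dec1 : tens_id E1 rho0 = \sum_(k < n) real_complex R (p k) *: sigma k.
  apply: block_ext => a b; rewrite block_tens_id e1 block_sum /G1.
  by apply: eq_bigr => k _; rewrite hsig btau.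
have dec2 : tens_id E2 rho0 =
    \sum_(k < n) real_complex R (p k) *: tens_id (Phis k) (sigma k).
  apply: block_ext => a b; rewrite block_tens_id e2 block_sum /G2.
  apply: eq_bigr => k _; rewrite block_scale block_tens_id.
  by case: (HPhi k) => hl _ _; rewrite -(linZ hl) -block_scale hsig btau.
have le1 : ((\sum_(k < n) p k * f (sigma k))%:E <= F_max f (tens_id E1 rho0))%E.
  apply: le_ereal_sup_tmp; exists ((\sum_(k < n) p k * f (sigma k))%:E) => //.
  by exists n, p, sigma; split.
have le2 : (F_min f (tens_id E2 rho0) <=
            (\sum_(k < n) p k * f (tens_id (Phis k) (sigma k)))%:E)%E.
  apply: ge_ereal_inf; exists ((\sum_(k < n) p k * f (tens_id (Phis k) (sigma k)))%:E) => //.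
  exists n, p, (fun k => tens_id (Phis k) (sigma k)); split => //.
  by move=> k; apply: state_tens_id.
have le3 : ((\sum_(k < n) p k * f (tens_id (Phis k) (sigma k)))%:E <=
            (\sum_(k < n) p k * f (sigma k))%:E)%E.
  rewrite lee_fin; apply: ler_sum => k _; apply: ler_wpM2l => //.
  exact: fmono.
have := lt_le_trans Hlt (le_trans le2 (le_trans le3 le1)).
by rewrite ltxx.
Qed.
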